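(* Let $x$ be an $n\times n$ matrix of indeterminates over $\mathbb{Z}$, let $\Delta_i(x)$ be the determinant of the matrix obtained from $x$ by removing the first $i$ rows and the first $i$ columns, and let $\Delta(x)=\prod_{i=1}^{n-1}\Delta_i(x)$. Let $W$ be the group of all $n\times n$ matrices obtained from the identity matrix $1_n$ by permuting its columns. Then there exist $w_0,\dots,w_N\in W$, elements $a_1(x),\dots,a_N(x)\in\mathbb{Z}[x,\Delta(x)^{-1}]$ and $1\times(n-1)$ vectors $b_1(x),\dots,b_N(x)\in\mathbb{Z}[x,\Delta(x)^{-1}]^{n-1}$ such that, setting $$s_i(x)=\begin{pmatrix}a_i(x)&b_i(x)\\0&1_{n-1}\end{pmatrix},$$ one has $$x=w_0\cdot s_1(x)\cdot w_1\cdot s_2(x)\cdot w_2\cdots s_N(x)\cdot w_N.$$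
   Context: $\mathbb{Z}[x,\Delta(x)^{-1}]$ denotes the polynomial ring over $\mathbb{Z}$ in the $n^2$ entries of $x$, localized at $\Delta(x)$; $1_{n-1}$ is the $(n-1)\times(n-1)$ identity matrix. *)

(* Defs.v *)
From HB Require Import structures.
From mathcomp Require Import all_boot all_order all_algebra all_fingroup.
From mathcomp Require Import mpoly.
Set Implicit Arguments. Unset Strict Implicit. Unset Printing Implicit Defensive.
Import GRing.Theory.
Local Open Scope ring_scope.

(* Polynomial ring Z[x] in the (n+1)^2 entries of a generic (n+1)x(n+1) matrix;
   the variable for entry (i,j) is 'X_(mxvec_index i j). *)
Definition Zx (n : nat) := {mpoly int[n.+1 * n.+1]}.

Definition gen_x (n : nat) : 'M[Zx n]_n.+1 :=
  \matrix_(i, j) 'X_(mxvec_index i j).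

Definition Delta_i (n i : nat) : Zx n :=
  \det (\matrix_(k < n.+1 - i, l < n.+1 - i)
          gen_x n (inord (i + k)) (inord (i + l))).

Definition Delta (n : nat) : Zx n := \prod_(1 <= i < n.+1) Delta_i n i.

(* Fraction field of Z[x]; Z[x, Delta^{-1}] is realised as its subring of
   elements p / Delta^k. *)
Definition Kx (n : nat) := {fraction Zx n}.

Definition in_loc (n : nat) (f : Kx n) : Prop :=
  exists (p : Zx n) (k : nat), f = (tofrac p) / (tofrac (Delta n)) ^+ k.

Definition smx (n : nat) (a : Kx n) (b : 'rV[Kx n]_n) : 'M[Kx n]_(1 + n) :=
  block_mx (a%:M : 'M_1) b 0 1%:M.

Definition toK (n : nat) (p : Zx n) : Kx n := tofrac p.

(* Main.v *)
Require Import Defs.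
From HB Require Import structures.
From mathcomp Require Import all_boot all_order all_algebra all_fingroup.
From mathcomp Require Import mpoly.
Set Implicit Arguments. Unset Strict Implicit. Unset Printing Implicit Defensive.
Import GRing.Theory.
Local Open Scope ring_scope.

Lemma det_castmx (R : comNzRingType) m1 m2 (e : m1 = m2) (A : 'M[R]_m1) :
  \det (castmx (e, e) A) = \det A.
Proof. by case: m2 / e; rewrite castmx_id. Qed.

Lemma det_sz0 (R : comNzRingType) k (e : k = 0%N) (A : 'M[R]_k) : \det A = 1.
Proof. by subst k; rewrite det_mx00. Qed.

Section S.
Variable n : nat.
Local Notation m := n.+1.

Definition Dmx (i : nat) : 'M[Zx n]_(m - i) :=
  \matrix_(k < m - i, l < m - i) gen_x n (inord (i + k)) (inord (i + l)).

Lemma Delta_iE i : Delta_i n i = \det (Dmx i). Proof. by []. Qed.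

Definition pt : 'I_(m * m) -> int := fun t => mxvec (1%:M : 'M[int]_m) 0 t.

Lemma meval_Delta_i i : meval pt (Delta_i n i) = 1.
Proof.
rewrite Delta_iE -det_map_mx.
have -> : map_mx (meval pt) (Dmx i) = 1%:M; last by rewrite det1.
apply/matrixP => k l; rewrite !mxE mevalXU /pt mxvecE !mxE.
have hk : (i + k < m)%N by rewrite -ltn_subRL.
have hl : (i + l < m)%N by rewrite -ltn_subRL.
congr ((_ : bool)%:R); apply/eqP/eqP => [/(congr1 val)|->//].
by rewrite /= !inordK // => /addnI /val_inj.
Qed.

Lemma Delta_neq0 : Delta n != 0.
Proof.
apply/eqP => h; have := congr1 (meval pt) h.
rewrite rmorph0 /Delta rmorph_prod big1 => [|i _]; last exact: meval_Delta_i.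
by move/eqP; rewrite oner_eq0.
Qed.

Lemma Delta_div i : (1 <= i <= m)%N -> exists q, Delta n = Delta_i n i * q.
Proof.
case/andP => h1 h2; case: (ltnP i m) => h3.
  exists ((\prod_(1 <= j < i) Delta_i n j) * \prod_(i.+1 <= j < m) Delta_i n j).
  rewrite /Delta (big_cat_nat h1 (ltnW h3)) /= (big_ltn h3).
  by rewrite mulrCA.
have -> : i = m by apply/eqP; rewrite eqn_leq h2 h3.
exists (Delta n); rewrite Delta_iE (det_sz0 (subnn _)) mul1r //.
Qed.

Definition Yp (i : nat) : 'M[Zx n]_m :=
  \matrix_(r, c) if (i <= r)%N then gen_x n r c else (r == c)%:R.

Lemma det_Yp i : (i <= m)%N -> \det (Yp i) = Delta_i n i.
Proof.
move=> him; have e : (i + (m - i) = m)%N by rewrite subnKC.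
pose C : 'M[Zx n]_(m - i, i) := \matrix_(k, l) gen_x n (inord (i + k)) (inord l).
have -> : Yp i = castmx (e, e) (block_mx 1%:M 0 C (Dmx i)).
  apply/matrixP => r c; rewrite castmxE /=.
  rewrite -[cast_ord _ r]splitK -[cast_ord _ c]splitK.
  case: splitP => r0 /= Hr; case: splitP => c0 /= Hc.
  - rewrite block_mxEul !mxE Hr (leqNgt i r0) (ltn_ord r0) /=.
    by rewrite -val_eqE /= Hr Hc.
  - rewrite block_mxEur !mxE Hr (leqNgt i r0) (ltn_ord r0) /=.
    case: eqP => // /(congr1 val) /=; rewrite Hr Hc => h.
    by move: (ltn_ord r0); rewrite h ltnNge leq_addr.
  - rewrite block_mxEdl !mxE Hr leq_addr; congr ('X_(mxvec_index _ _)); apply/val_inj; rewrite /= inordK ?Hr ?Hc //.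
      by rewrite -Hr.
    by rewrite -Hc.
  - rewrite block_mxEdr !mxE Hr leq_addr; congr ('X_(mxvec_index _ _)); apply/val_inj; rewrite /= inordK ?Hr ?Hc //.
      by rewrite -Hr.
    by rewrite -Hc.
by rewrite det_castmx det_lblock det1 mul1r.
Qed.

Definition XK : 'M[Kx n]_m := map_mx (@toK n) (gen_x n).
Definition YK i : 'M[Kx n]_m := map_mx (@toK n) (Yp i).

Definition Emx (k : 'I_m) (v : 'rV[Kx n]_m) : 'M[Kx n]_m :=
  \matrix_(r, c) if r == k then v 0 c else (r == c)%:R.

Lemma Emx_mul k v (M : 'M[Kx n]_m) : Emx k v *m M = \matrix_(r, c) if r == k then (v *m M) 0 c else M r c.
Proof.
apply/matrixP => r c; rewrite !mxE; under eq_bigr do rewrite mxE.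
case: eqP => _; first by [].
rewrite (bigD1 r) //= big1 ?addr0 => [|j /negPf hj]; first by rewrite eqxx mul1r.
by rewrite eq_sym hj mul0r.
Qed.

Lemma YK_unit i : (1 <= i <= m)%N -> YK i \in unitmx.
Proof.
move=> hi; rewrite unitmxE unitfE /YK.
change (\det (map_mx (@tofrac (Zx n)) (Yp i)) != 0).
rewrite det_map_mx det_Yp; last by case/andP: hi.
rewrite tofrac_eq0.
case: (Delta_div hi) => q hq; apply/eqP => h; move: Delta_neq0.
by rewrite hq h mul0r eqxx.
Qed.

Lemma YK_step i (hi : (i < m)%N) :
  YK i = Emx (Ordinal hi) (row (Ordinal hi) XK *m invmx (YK i.+1)) *m YK i.+1.
Proof.
rewrite Emx_mul -mulmxA mulVmx ?YK_unit // ?hi ?andbT // mulmx1.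
apply/matrixP => r c; rewrite !mxE; case: (eqVneq r (Ordinal hi)) => [->|hr].
  by rewrite /= leqnn.
have : r != i :> nat by apply/eqP => h; move/eqP: hr; apply; exact: val_inj.
rewrite neq_ltn; case/orP => h.
  by rewrite leqNgt h /= leqNgt ltnS (ltnW h).
by rewrite ltnW // h.
Qed.

Lemma v_loc i (hi : (i < m)%N) j :
  in_loc ((row (Ordinal hi) XK *m invmx (YK i.+1)) 0 j).
Proof.
have hi' : (1 <= i.+1 <= m)%N by rewrite ltnS leq0n.
case: (Delta_div hi') => q hq.
have hD : tofrac (Delta n) != 0 by rewrite tofrac_eq0 Delta_neq0.
have hq0 : tofrac q != 0.
  rewrite tofrac_eq0; apply/eqP => h; move: Delta_neq0.
  by rewrite hq h mulr0 eqxx.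
rewrite /invmx YK_unit //.
rewrite /YK /XK /toK.
rewrite det_map_mx det_Yp // -map_mx_adj -map_row -scalemxAr -map_mxM !mxE.
exists (q * (row (Ordinal hi) (gen_x n) *m \adj (Yp i.+1)) 0 j), 1%N.
rewrite expr1 hq !rmorphM invfM [in RHS]mxE.
rewrite -mulrA [RHS]mulrCA [LHS]mulrC; congr (_ * _).
by rewrite mulrCA (mulfV hq0) mulr1.
Qed.

Lemma smxE a b (r c : 'I_m) : (smx a b : 'M_m) r c =
  if r == ord0 then (if unlift ord0 c is Some c' then b 0 c' else a)
  else (r == c)%:R.
Proof.
rewrite /smx -[r](@splitK 1 n) -[c](@splitK 1 n).
case: splitP => r0 _; case: splitP => c0 _ /=.
- rewrite (ord1 r0) (ord1 c0) (@block_mxEul _ 1 n 1 n) !mxE.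
  have -> : lshift n (ord0 : 'I_1) = ord0 by apply: val_inj.
  by rewrite eqxx unlift_none.
- rewrite (ord1 r0) (@block_mxEur _ 1 n 1 n).
  have -> : lshift n (ord0 : 'I_1) = ord0 by apply: val_inj.
  have -> : rshift 1 c0 = lift ord0 c0 by apply: val_inj.
  by rewrite eqxx liftK.
- rewrite (ord1 c0) (@block_mxEdl _ 1 n 1 n) mxE -!val_eqE /=.
  by [].
- rewrite (@block_mxEdr _ 1 n 1 n) !mxE -!val_eqE /= eqn_add2l.
  by [].
Qed.

Lemma Emx_fact k v : Emx k v = perm_mx (tperm ord0 k) *m
   (smx (v 0 k) (\row_j v 0 (tperm ord0 k (lift ord0 j))) : 'M_m) *m perm_mx (tperm ord0 k).
Proof.
set s := tperm ord0 k; set S := (smx _ _ : 'M_m).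
rewrite -mulmxA.
have -> : S *m perm_mx s = col_perm s^-1 S by rewrite col_permE invgK.
rewrite -row_permE; apply/matrixP => r c.
rewrite /Emx [LHS]mxE [row_perm _ _ _ _]mxE [col_perm _ _ _ _]mxE /S smxE tpermV.
have hs : forall x, (s x == ord0) = (x == k).
  by move=> x; rewrite -{1}(tpermR ord0 k) (inj_eq perm_inj).
rewrite hs (inj_eq perm_inj); case: eqP => // _.
case: unliftP => [c' hc|hc]; first by rewrite mxE -hc tpermK.
have -> : c = k by rewrite -(tpermK ord0 k c) -/s hc tpermL.
by [].
Qed.

Definition Rep (M : 'M[Kx n]_m) : Prop :=
  exists (N : nat) (w : 'I_N.+1 -> 'S_n.+1)
         (a : 'I_N -> Kx n) (b : 'I_N -> 'rV[Kx n]_n),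
    (forall i, in_loc (a i)) /\
    (forall i j, in_loc (b i 0 j)) /\
    M = perm_mx (w ord0) *m
      \prod_(i < N) ((smx (a i) (b i) : 'M[Kx n]_n.+1) *m perm_mx (w (lift ord0 i))).

Lemma Rep1 : Rep 1%:M.
Proof.
exists 0%N, (fun _ => 1%g), (fun _ => 0), (fun _ => 0).
split; first by case. split; first by case.
by rewrite big_ord0 perm_mx1 mulmx1.
Qed.

Lemma Rep_E k (v : 'rV[Kx n]_m) M : (forall j, in_loc (v 0 j)) -> Rep M -> Rep (Emx k v *m M).
Proof.
move=> hv [N [w [a [b [ha [hb ->]]]]]].
rewrite Emx_fact; set s := tperm ord0 k.
exists N.+1, (fun j : 'I_N.+2 => if unlift ord0 j is Some j' then
     (if unlift ord0 j' is Some j'' then w (lift ord0 j'') else (s * w ord0)%g) else s),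
  (fun i : 'I_N.+1 => if unlift ord0 i is Some i' then a i' else v 0 k),
  (fun i : 'I_N.+1 => if unlift ord0 i is Some i' then b i' else \row_j v 0 (s (lift ord0 j))).
split; first by move=> i; case: unliftP.
split; first by move=> i j; case: unliftP => [i' _|_] //; rewrite mxE.
rewrite big_ord_recl /= unlift_none !liftK unlift_none.
under [X in _ = _ *m (_ * X)]eq_bigr do rewrite !liftK.
rewrite perm_mxM -[_ * \prod_(i < N) _]/(mulmx _ _) !mulmxA.
by [].
Qed.

Lemma YK_m : YK m = 1%:M.
Proof.
apply/matrixP => r c; rewrite !mxE leqNgt ltn_ord /=.
by case: eqP => _; rewrite /toK ?tofrac0 // rmorph1.
Qed.

Lemma YK_0 : YK 0 = XK.
Proof. by apply/matrixP => r c; rewrite !mxE. Qed.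

Lemma Rep_YK t : (t <= m)%N -> Rep (YK (m - t)).
Proof.
elim: t => [_|t IH ht]; first by rewrite subn0 YK_m; exact: Rep1.
have hi : (m - t.+1 < m)%N by rewrite ltn_subrL.
rewrite (YK_step hi); apply: Rep_E; first exact: v_loc.
by rewrite subnSK //; apply: IH; apply: ltnW.
Qed.
End S.

Theorem lemma3p9 (n : nat) :
  exists (N : nat) (w : 'I_N.+1 -> 'S_n.+1)
         (a : 'I_N -> Kx n) (b : 'I_N -> 'rV[Kx n]_n),
    (forall i, in_loc (a i)) /\
    (forall i j, in_loc (b i 0 j)) /\
    map_mx (@toK n) (@gen_x n) =
      perm_mx (w ord0) *m
      \prod_(i < N) ((smx (a i) (b i) : 'M[Kx n]_n.+1) *m perm_mx (w (lift ord0 i))).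
Proof.
have := @Rep_YK n n.+1 (leqnn _); rewrite subnn YK_0; exact.
Qed.
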